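(* Let $\gamma\ge1$, $n\in\mathbb{N}^*$, $\lambda_n=\lambda_{n,\gamma}$ and $x_n=\big(\lambda_n/(n\pi)^2\big)^{1/(2\gamma)}$, and assume $x_n<1$. Define $$\mu_n=\min\Big\{\frac{n\pi}{\gamma+1},\ \frac{\gamma}{\gamma+1}\Big(\frac{(n\pi)^2}{\lambda_n}\Big)^{\frac12+\frac1{2\gamma}}\Big\},\qquad C_n=\frac{2\lambda_ne^{\mu_nx_n^{\gamma+1}}}{(\gamma+1)\mu_nx_n^{\gamma-\frac12}},\qquad W_n(x)=C_ne^{-\mu_nx^{\gamma+1}}.$$ Then $W_n$ satisfies $-W_n''(x)+[(n\pi)^2x^{2\gamma}-\lambda_n]W_n(x)\ge0$ for all $x\in(x_n,1)$, $W_n(1)\ge0$, and $W_n'(x_n)<-\sqrt{x_n}\,\lambda_n$.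
   Context: $\lambda_{n,\gamma}$ is the smallest eigenvalue of the operator $A_{n,\gamma}\varphi=-\varphi''+(n\pi)^2|x|^{2\gamma}\varphi$ with domain $H^2(-1,1)\cap H^1_0(-1,1)$ (in particular $\lambda_n>0$). *)

(* Defs.v *)
From Stdlib Require Import Reals Lra.
Open Scope R_scope.

(* a^y for a >= 0 and y > 0, with the convention 0^y = 0
   (Stdlib's Rpower is only meaningful for a > 0). *)
Definition pw (a y : R) : R := if Rlt_dec 0 a then Rpower a y else 0.

Definition potential (g : R) (n : nat) (x : R) : R :=
  (INR n * PI) ^ 2 * pw (Rabs x) (2 * g).

(* lam is an eigenvalue of A_{n,g} phi = -phi'' + (n pi)^2 |x|^(2g) phi on
   (-1,1) with Dirichlet boundary conditions: there is a nonzero phi,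
   twice differentiable on (-1,1), with phi -> 0 at both endpoints,
   solving -phi'' + V phi = lam phi on (-1,1). *)
Definition is_eigenvalue (g : R) (n : nat) (lam : R) : Prop :=
  exists phi phi1 phi2 : R -> R,
    (exists x, -1 < x < 1 /\ phi x <> 0) /\
    (forall x, -1 < x < 1 ->
       derivable_pt_lim phi x (phi1 x) /\
       derivable_pt_lim phi1 x (phi2 x) /\
       - phi2 x + potential g n x * phi x = lam * phi x) /\
    limit1_in phi (fun y => -1 < y < 1) 0 (-1) /\
    limit1_in phi (fun y => -1 < y < 1) 0 1.

Definition is_smallest_eigenvalue (g : R) (n : nat) (lam : R) : Prop :=
  is_eigenvalue g n lam /\ forall mu, is_eigenvalue g n mu -> lam <= mu.

Definition xn (g : R) (n : nat) (lam : R) : R :=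
  Rpower (lam / (INR n * PI) ^ 2) (1 / (2 * g)).

Definition mun (g : R) (n : nat) (lam : R) : R :=
  Rmin (INR n * PI / (g + 1))
       (g / (g + 1) * Rpower ((INR n * PI) ^ 2 / lam) (1 / 2 + 1 / (2 * g))).

Definition Cn (g : R) (n : nat) (lam : R) : R :=
  2 * lam * exp (mun g n lam * Rpower (xn g n lam) (g + 1))
  / ((g + 1) * mun g n lam * Rpower (xn g n lam) (g - 1 / 2)).

Definition Wn (g : R) (n : nat) (lam : R) (x : R) : R :=
  Cn g n lam * exp (- mun g n lam * pw x (g + 1)).

(* Main.v *)
Require Import Defs.
From Stdlib Require Import Reals Lra Lia.
Open Scope R_scope.

Lemma dE (m a x : R) : 0 < x ->
  derivable_pt_lim (fun y => exp (- m * Rpower y a)) x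
    (exp (- m * Rpower x a) * (- m * (a * Rpower x (a - 1)))).
Proof.
  intro hx.
  apply (derivable_pt_lim_comp (fun y => - m * Rpower y a) exp).
  - replace (- m * (a * Rpower x (a - 1))) with (0 * Rpower x a + (- m) * (a * Rpower x (a-1))) by ring.
    apply (derivable_pt_lim_mult (fun _ => - m) (fun y => Rpower y a)).
    + apply derivable_pt_lim_const.
    + now apply derivable_pt_lim_power.
  - apply derivable_pt_lim_exp.
Qed.

Lemma dF (m a g x : R) : 0 < x -> a - 1 = g ->
  derivable_pt_lim (fun y => Rpower y g * exp (- m * Rpower y a)) x
    (g * Rpower x (g - 1) * exp (- m * Rpower x a)
     + Rpower x g * (exp (- m * Rpower x a) * (- m * (a * Rpower x g)))).
Proof.
  intros hx ha.
  apply (derivable_pt_lim_mult (fun y => Rpower y g) (fun y => exp (- m * Rpower y a))).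
  - now apply derivable_pt_lim_power.
  - rewrite <- ha. now apply dE.
Qed.

Lemma ln_nonpos y : y <= 0 -> ln y = 0.
Proof. intro h. unfold ln. destruct (Rlt_dec 0 y) as [h1|h1]. exfalso; lra. reflexivity. Qed.

Theorem mainTheorem9 (g : R) (n : nat) (lam : R)
  (hg : 1 <= g) (hn : (1 <= n)%nat)
  (hlam : is_smallest_eigenvalue g n lam)
  (hx : xn g n lam < 1) :
  exists W1 : R -> R,
    (forall x, 0 < x -> derivable_pt_lim (Wn g n lam) x (W1 x)) /\
    (forall x, xn g n lam < x < 1 ->
       exists w2, derivable_pt_lim W1 x w2 /\
         - w2 + ((INR n * PI) ^ 2 * Rpower x (2 * g) - lam) * Wn g n lam x >= 0) /\
    Wn g n lam 1 >= 0 /\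
    W1 (xn g n lam) < - sqrt (xn g n lam) * lam.
Proof.
  clear hlam.
  set (N := INR n * PI).
  assert (hN : 0 < N).
  { unfold N. apply Rmult_lt_0_compat. apply lt_0_INR. lia. apply PI_RGT_0. }
  assert (hl : 0 < lam).
  { destruct (Rlt_dec 0 lam) as [h|h]; [exact h|].
    exfalso. unfold xn, Rpower in hx. fold N in hx.
    rewrite ln_nonpos in hx. rewrite Rmult_0_r, exp_0 in hx. lra.
    unfold Rdiv. assert (0 < / N^2) by (apply Rinv_0_lt_compat; apply pow_lt; lra). nra. }
  set (a := g + 1).
  set (x0 := xn g n lam).
  set (m := mun g n lam).
  set (C := Cn g n lam).
  assert (hN2 : 0 < N ^ 2) by (apply pow_lt; lra).
  assert (hx0 : 0 < x0) by (unfold x0, xn, Rpower; apply exp_pos).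
  assert (hm : 0 < m).
  { unfold m, mun. fold N. apply Rmin_glb_lt.
    - apply Rdiv_lt_0_compat; lra.
    - apply Rmult_lt_0_compat. apply Rdiv_lt_0_compat; lra.
      unfold Rpower; apply exp_pos. }
  assert (hC : 0 < C).
  { unfold C, Cn. fold m x0. apply Rdiv_lt_0_compat.
    apply Rmult_lt_0_compat. lra. apply exp_pos.
    apply Rmult_lt_0_compat. apply Rmult_lt_0_compat; lra.
    unfold Rpower; apply exp_pos. }
  assert (ha1 : a - 1 = g) by (unfold a; ring).
  exists (fun x => C * (- m * a) * (Rpower x g * exp (- m * Rpower x a))).
  split; [|split; [|split]].
  - intros x hxp.
    apply (derivable_pt_lim_locally_ext (fun y => C * exp (- m * Rpower y a)) _ x 0 (x+1)).
    + lra.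
    + intros z hz. unfold Wn, pw. fold m C. fold a.
      destruct (Rlt_dec 0 (z)); [reflexivity|lra].
    + replace (C * (- m * a) * (Rpower x g * exp (- m * Rpower x a)))
        with (0 * exp (- m * Rpower x a) + C * (exp (- m * Rpower x a) * (- m * (a * Rpower x (a - 1))))).
      2:{ rewrite ha1. ring. }
      apply (derivable_pt_lim_mult (fun _ => C) (fun y => exp (- m * Rpower y a))).
      apply derivable_pt_lim_const. now apply dE.
  - intros x [hx1 hx2].
    assert (hxp : 0 < x) by lra.
    eexists. split.
    + replace (C * (- m * a) * (Rpower x g * exp (- m * Rpower x a))) with
        (C * (- m * a) * (Rpower x g * exp (- m * Rpower x a))) by reflexivity.
      apply (derivable_pt_lim_scal (fun y => Rpower y g * exp (- m * Rpower y a))).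
      now apply dF.
    + assert (HW : Wn g n lam x = C * exp (- m * Rpower x a)).
      { unfold Wn, pw. fold m C a. destruct (Rlt_dec 0 x); [reflexivity|lra]. }
      rewrite HW.
      set (E := exp (- m * Rpower x a)).
      assert (hE : 0 < E) by apply exp_pos.
      set (y := lam / N ^ 2).
      assert (hy : 0 < y) by (unfold y; apply Rdiv_lt_0_compat; lra).
      set (p := Rpower x (g - 1)).
      set (p0 := Rpower x0 (g - 1)).
      set (t0 := Rpower x0 a).
      assert (Hr : Rpower x g = p * x).
      { unfold p. rewrite <- (Rpower_1 x hxp) at 3. rewrite <- Rpower_plus.
        f_equal; ring. }
      assert (Hq : Rpower x (2 * g) = Rpower x g * Rpower x g).
      { rewrite <- Rpower_plus. f_equal; ring. }
      assert (Hq0 : Rpower x0 (2 * g) = p0 * t0).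
      { unfold p0, t0, a. rewrite <- Rpower_plus. f_equal; ring. }
      assert (Hx0y : Rpower x0 (2 * g) = y).
      { unfold x0, xn. fold N y. rewrite Rpower_mult.
        replace (1 / (2 * g) * (2 * g)) with 1 by (field; lra).
        now apply Rpower_1. }
      assert (hp : p0 <= p).
      { unfold p, p0. apply Rle_Rpower_l; lra. }
      assert (hp0 : 0 < p0) by (unfold p0, Rpower; apply exp_pos).
      assert (hq : Rpower x0 (2 * g) <= Rpower x (2 * g)).
      { apply Rle_Rpower_l; lra. }
      assert (hmN : m * a <= N).
      { assert (hmN' : m <= N / a) by (unfold m, mun; fold N; apply Rmin_l).
        apply Rmult_le_compat_r with (r := a) in hmN'; [|unfold a; lra].
        replace (N / a * a) with N in hmN' by (field; unfold a; lra). exact hmN'. }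
      assert (hmt : m * a * t0 <= g).
      { assert (Ht0 : t0 = Rpower y (1 / 2 + 1 / (2 * g))).
        { unfold t0, x0, xn. fold N y. rewrite Rpower_mult. f_equal. unfold a. field. lra. }
        assert (Hprod : Rpower (N ^ 2 / lam) (1 / 2 + 1 / (2 * g)) * t0 = 1).
        { rewrite Ht0, Rpower_mult_distr.
          replace (N ^ 2 / lam * y) with 1 by (unfold y; field; lra).
          unfold Rpower. rewrite ln_1, Rmult_0_r. apply exp_0.
          apply Rdiv_lt_0_compat; lra. exact hy. }
        assert (hmm : m <= g / a * Rpower (N ^ 2 / lam) (1 / 2 + 1 / (2 * g))).
        { unfold m, mun. fold N. apply Rmin_r. }
        assert (ht0 : 0 < t0) by (unfold t0, Rpower; apply exp_pos).
        apply Rmult_le_compat_r with (r := a * t0) in hmm.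
        replace (g / a * Rpower (N ^ 2 / lam) (1 / 2 + 1 / (2 * g)) * (a * t0))
          with (g * (Rpower (N ^ 2 / lam) (1 / 2 + 1 / (2 * g)) * t0)) in hmm
          by (field; unfold a; lra).
        rewrite Hprod in hmm. lra.
        apply Rmult_le_pos; unfold a; lra. }
      assert (HNy : N ^ 2 * y = lam) by (unfold y; field; lra).
      rewrite Hq. rewrite Hq, Hx0y in hq. rewrite Hq0 in Hx0y.
      rewrite Hr in hq |- *.
      set (q := p * x * (p * x)) in *.
      assert (Hf : 0 <= m * a * g * p + (N ^ 2 - (m * a) ^ 2) * q - lam).
      { assert (h1 : m * a * g * p0 <= m * a * g * p).
        { apply Rmult_le_compat_l; [|exact hp]. apply Rmult_le_pos; [apply Rmult_le_pos|]; unfold a; lra. }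
        assert (h2 : (N ^ 2 - (m * a) ^ 2) * y <= (N ^ 2 - (m * a) ^ 2) * q).
        { apply Rmult_le_compat_l; [|exact hq]. assert (0 <= m * a) by (apply Rmult_le_pos; unfold a; lra). nra. }
        assert (h3 : 0 <= m * a * p0 * (g - m * a * t0)).
        { apply Rmult_le_pos; [|lra]. apply Rmult_le_pos; [apply Rmult_le_pos|]; unfold a; lra. }
        rewrite <- Hx0y in h2. nra. }
      apply Rle_ge.
      replace (- (C * (- m * a) * (g * p * E + p * x * (E * (- m * (a * (p * x)))))) +
               (N ^ 2 * q - lam) * (C * E))
        with ((C * E) * (m * a * g * p + (N ^ 2 - (m * a) ^ 2) * q - lam))
        by (unfold q; ring).
      apply Rmult_le_pos; [|exact Hf]. apply Rmult_le_pos; lra.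
  - unfold Wn. fold C. left. apply Rlt_gt, Rmult_lt_0_compat; [lra| apply exp_pos].
  - assert (HC : C = 2 * lam * exp (m * Rpower x0 a) / (a * m * Rpower x0 (g - 1 / 2))).
    { reflexivity. }
    assert (Hg : Rpower x0 g = Rpower x0 (g - 1/2) * sqrt x0).
    { rewrite <- Rpower_sqrt by exact hx0. rewrite <- Rpower_plus. f_equal; field. }
    assert (hs : 0 < sqrt x0) by (apply sqrt_lt_R0; exact hx0).
    assert (hQ : 0 < Rpower x0 (g - 1/2)) by (unfold Rpower; apply exp_pos).
    assert (hEp : 0 < exp (m * Rpower x0 a)) by apply exp_pos.
    replace (C * (- m * a) * (Rpower x0 g * exp (- m * Rpower x0 a))) with (- 2 * lam * sqrt x0).
    + nra.
    + rewrite HC, Hg. replace (- m * Rpower x0 a) with (- (m * Rpower x0 a)) by ring.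
      rewrite exp_Ropp. field. repeat split; try lra; unfold a; lra.
Qed.
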